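(* Let $x\in\{\text{stage},\text{stage2},\text{CF2}\}$ and let $\sigma_x^{\cap}$ be the skeptical mode of $\sigma_x$. Then there exist argumentation frameworks $AF=(AR,Attacks)$ and $AF'=(AR',Attacks')$ with $AF\preceq_N AF'$ such that the following statement does NOT hold: $$\forall E\in\sigma_x^{\cap}(AF)\ \exists E'\in\sigma_x^{\cap}(AF') \text{ such that } (E'\not\subseteq AR\ \lor\ E'=E).$$
   Context: An argumentation framework is a pair $AF=(AR,Attacks)$ with $AR$ a finite set and $Attacks\subseteq AR\times AR$; $a$ attacks $b$ iff $(a,b)\in Attacks$; a set $S$ attacks $b$ iff some element of $S$ attacks $b$. An argumentation semantics $\sigma$ assigns to each $AF$ a set $\sigma(AF)$ of subsets of $AR$. $AF\preceq_N AF'$ (normal expansion) iff $AR\subseteq AR'$, $Attacks\subseteq Attacks'$ and no $(a,b)\in Attacks'\setminus Attacks$ has $a,b\in AR$. Skeptical mode: $\sigma^{\cap}(AF)=\{\bigcap_{E\in\sigma(AF)}E\}$. $S\subseteq AR$ is conflict-free iff no element of $S$ attacks an element of $S$. $S^+=\{b: \text{some } a\in S \text{ attacks } b\}$. A naive extension is a $\subseteq$-maximal conflict-free set. A stage extension is a conflict-free $S$ such that no conflict-free $S'$ has $S'\cup S'^+\supsetneq S\cup S^+$. Attack sequence: $\langle a_1,\dots,a_n\rangle$ of pairwise distinct arguments with $(a_i,a_{i+1})\in Attacks$; $b$ is reachable from $a$ iff such a sequence has $a_1=a$, $a_n=b$. The strongly connected components (SCCs) of $AF$ are the maximal sets of mutually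 reachable arguments; $SCCS_{AF}$ is the set of them. For $S\subseteq AR$, the restriction $AF\downarrow_S=(S, Attacks\cap(S\times S))$. For an SCC $S$ and $E\subseteq AR$: $S^-_{out}=\{a\notin S: a \text{ attacks some element of } S\}$; $D_{AF}(S,E)=\{a\in S: E\cap S^-_{out} \text{ attacks } a\}$; $P_{AF}(S,E)=\{a\in S: E\cap S^-_{out}\text{ does not attack } a \text{ and } \exists b\in S^-_{out} \text{ attacking } a \text{ such that } E \text{ does not attack } b\}$; $U_{AF}(S,E)=S\setminus(D_{AF}(S,E)\cup P_{AF}(S,E))$; $UP_{AF}(S,E)=U_{AF}(S,E)\cup P_{AF}(S,E)$. CF2: $E\subseteq AR$ is a CF2 extension of $AF$ iff either $|SCCS_{AF}|=1$ and $E$ is a naive extension of $AF$, or $|SCCS_{AF}|>1$ and for every $S\in SCCS_{AF}$, $E\cap S$ is a CF2 extension of $AF\downarrow_{UP_{AF}(S,E)}$. Stage2 is defined identically with ''naive extension'' replaced by ''stage extension''. $\sigma_x(AF)$ denotes the set of all $x$-extensions. *)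

(* Defs.v *)
From mathcomp Require Import all_boot.
Set Implicit Arguments. Unset Strict Implicit. Unset Printing Implicit Defensive.

Section AF.
Variable T : finType.

Record AF := mkAF {
  AR : {set T};
  Att : {set T * T};
  Att_wf : Att \subset setX AR AR }.

Definition set_attacks (Att : {set T * T}) (S : {set T}) (b : T) : bool :=
  [exists a in S, (a, b) \in Att].

Definition conflict_free (Att : {set T * T}) (S : {set T}) : bool :=
  [forall a in S, forall b in S, (a, b) \notin Att].

Definition plus (Att : {set T * T}) (S : {set T}) : {set T} :=
  [set b | set_attacks Att S b].

Definition naive (ar : {set T}) (Att : {set T * T}) (S : {set T}) : Prop :=
  S \subset ar /\ conflict_free Att S /\
  forall S' : {set T}, S' \subset ar -> conflict_free Att S' -> S \subset S' -> S' = S.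

Definition stage (ar : {set T}) (Att : {set T * T}) (S : {set T}) : Prop :=
  S \subset ar /\ conflict_free Att S /\
  ~ (exists S' : {set T}, S' \subset ar /\ conflict_free Att S' /\
       (S :|: plus Att S) \proper (S' :|: plus Att S')).

(* b reachable from a: a in AR and there is an attack path from a to b
   (equivalently, a path with pairwise distinct arguments). *)
Definition reachable (ar : {set T}) (Att : {set T * T}) (a b : T) : bool :=
  (a \in ar) && connect (fun x y => (x, y) \in Att) a b.

Definition scc_of (ar : {set T}) (Att : {set T * T}) (a : T) : {set T} :=
  [set b in ar | reachable ar Att a b && reachable ar Att b a].

Definition SCCs (ar : {set T}) (Att : {set T * T}) : {set {set T}} :=
  [set scc_of ar Att a | a in ar].

Definition S_out_minus (Att : {set T * T}) (S : {set T}) : {set T} :=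
  [set a | (a \notin S) && [exists b in S, (a, b) \in Att]].

Definition D_set (Att : {set T * T}) (S E : {set T}) : {set T} :=
  [set a in S | set_attacks Att (E :&: S_out_minus Att S) a].

Definition P_set (Att : {set T * T}) (S E : {set T}) : {set T} :=
  [set a in S | ~~ set_attacks Att (E :&: S_out_minus Att S) a &&
     [exists b in S_out_minus Att S, ((b, a) \in Att) && ~~ set_attacks Att E b]].

Definition U_set (Att : {set T * T}) (S E : {set T}) : {set T} :=
  S :\: (D_set Att S E :|: P_set Att S E).

Definition UP_set (Att : {set T * T}) (S E : {set T}) : {set T} :=
  U_set Att S E :|: P_set Att S E.

(* SCC-recursive scheme with base semantics [base]; [k] is fuel
   (k = #|AR| suffices since UP(S,E) is a proper subset of AR whenever
   there is more than one SCC). *)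
Fixpoint scc_rec (base : {set T} -> {set T * T} -> {set T} -> Prop)
    (k : nat) (ar : {set T}) (Att : {set T * T}) (E : {set T}) : Prop :=
  E \subset ar /\
  if #|SCCs ar Att| <= 1 then base ar Att E
  else match k with
       | 0 => False
       | k'.+1 => forall S, S \in SCCs ar Att ->
           let up := UP_set Att S E in
           scc_rec base k' up (Att :&: setX up up) (E :&: S)
       end.

Definition stage_ext (F : AF) (E : {set T}) : Prop := stage (AR F) (Att F) E.
Definition cf2_ext (F : AF) (E : {set T}) : Prop :=
  scc_rec naive #|AR F| (AR F) (Att F) E.
Definition stage2_ext (F : AF) (E : {set T}) : Prop :=
  scc_rec stage #|AR F| (AR F) (Att F) E.

(* E is in the skeptical mode sigma^cap(F): E is the intersection of all
   sigma-extensions (taken inside AR). *)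
Definition skeptical (sigma : AF -> {set T} -> Prop) (F : AF) (E : {set T}) : Prop :=
  forall a, a \in E <-> (a \in AR F /\ forall E', sigma F E' -> a \in E').

Definition normal_expansion (F F' : AF) : Prop :=
  AR F \subset AR F' /\ Att F \subset Att F' /\
  forall a b, (a, b) \in Att F' -> (a, b) \notin Att F ->
    ~ (a \in AR F /\ b \in AR F).

End AF.

Inductive sem_kind := Stage | Stage2 | CF2.

Definition sigma_of (x : sem_kind) (T : finType) : AF T -> {set T} -> Prop :=
  match x with
  | Stage => @stage_ext T
  | Stage2 => @stage2_ext T
  | CF2 => @cf2_ext T
  end.

(* Main.v *)
Require Import Defs.
From mathcomp Require Import all_boot.
Set Implicit Arguments. Unset Strict Implicit. Unset Printing Implicit Defensive.

Definition ARF : {set bool} := [set true].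
Definition AttF : {set bool * bool} := set0.
Lemma wfF : AttF \subset setX ARF ARF. Proof. by rewrite sub0set. Qed.
Definition F := mkAF wfF.
Definition ARF' : {set bool} := setT.
Definition AttF' : {set bool * bool} := [set (true,false); (false,true)].
Lemma wfF' : AttF' \subset setX ARF' ARF'.
Proof. by apply/subsetP => -[??]; rewrite !inE. Qed.
Definition F' := mkAF wfF'.

Lemma inAttF' a b : ((a, b) \in AttF') = (a != b).
Proof. by case: a; case: b; rewrite !inE. Qed.

Lemma sccF : (#|SCCs ARF AttF| <= 1) = true.
Proof. by rewrite /SCCs /ARF imset_set1 cards1. Qed.

Lemma reachF' a b : reachable ARF' AttF' a b.
Proof.
rewrite /reachable /ARF' inE /=.
case: (eqVneq a b) => [-> | ne]; first exact: connect0.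
by apply: connect1; rewrite /= inAttF'.
Qed.

Lemma sccF' : (#|SCCs ARF' AttF'| <= 1) = true.
Proof.
have -> : SCCs ARF' AttF' = [set setT].
  apply/setP => X; rewrite inE; apply/imsetP/eqP.
    by move=> [a _ ->]; apply/setP => b; rewrite /scc_of !inE !reachF' ?/ARF' ?inE.
  move=> ->; exists true; first by rewrite /ARF' inE.
  by apply/setP => b; rewrite /scc_of !inE !reachF' ?/ARF' ?inE.
by rewrite cards1.
Qed.

Lemma cf0 S : conflict_free AttF S.
Proof. by apply/forallP => a; apply/implyP => _; apply/forallP => b; apply/implyP => _; rewrite inE. Qed.

Lemma plus0 S : plus AttF S = set0.
Proof. by apply/setP => b; rewrite !inE; apply/existsP => -[a /andP [_]]; rewrite inE. Qed.

Lemma sub1_cases (E : {set bool}) : E \subset ARF -> true \notin E -> E = set0.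
Proof.
move=> /subsetP H nt; apply/setP => b; rewrite inE; apply/negP => bE.
by have := H _ bE; rewrite /ARF inE => /eqP Hb; subst b; rewrite bE in nt.
Qed.

Lemma F_ext x E : sigma_of x F E -> true \in E.
Proof.
have Hs : stage ARF AttF E -> true \in E.
  move=> [sub [_ H]]; apply/negPn/negP => nt.
  have E0 := sub1_cases sub nt; subst E.
  apply: H; exists ARF; split => //; split; first exact: cf0.
  rewrite !plus0 !setU0 proper0; apply/eqP => /setP /(_ true).
  by rewrite /ARF !inE.
have Hn : naive ARF AttF E -> true \in E.
  move=> [sub [_ H]]; apply/negPn/negP => nt.
  have E0 := sub1_cases sub nt; subst E.
  have := H ARF (subxx _) (cf0 _) (sub0set _) => /setP /(_ true).
  by rewrite /ARF !inE.
case: x => /=.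
- exact: Hs.
- rewrite /stage2_ext /=; case: #|ARF| => [|k] /=; rewrite sccF => -[_]; exact: Hs.
- rewrite /cf2_ext /=; case: #|ARF| => [|k] /=; rewrite sccF => -[_]; exact: Hn.
Qed.

Lemma cf1 b : conflict_free AttF' [set b].
Proof.
apply/forallP => a; apply/implyP; rewrite inE => /eqP ->.
apply/forallP => c; apply/implyP; rewrite inE => /eqP ->.
by rewrite inAttF' eqxx.
Qed.

Lemma F'_ext x b : sigma_of x F' [set b].
Proof.
have Hs : stage ARF' AttF' [set b].
  split; first exact: subsetT. split; first exact: cf1.
  move=> [S' [_ [_ Hp]]].
  have : [set b] :|: plus AttF' [set b] = setT.
    apply/setP => c; rewrite !inE; case: (eqVneq c b) => //= ne.
    by apply/existsP; exists b; rewrite inE eqxx inAttF' eq_sym.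
  move=> Heq; rewrite Heq in Hp.
  by move: Hp; rewrite properE subsetT andbF.
have Hn : naive ARF' AttF' [set b].
  split; first exact: subsetT. split; first exact: cf1.
  move=> S' _ cf sub; apply/setP => c; rewrite inE.
  have bS : b \in S' by move/subsetP: sub; apply; rewrite inE.
  apply/idP/eqP => [cS | ->] //.
  apply/eqP; apply/negPn/negP => ne.
  move/forallP: cf => /(_ b) /implyP /(_ bS) /forallP /(_ c) /implyP /(_ cS).
  by rewrite inAttF' eq_sym ne.
case: x => /=.
- exact: Hs.
- rewrite /stage2_ext /=; case: #|ARF'| => [|k] /=; rewrite sccF';
  (split; [exact: subsetT | exact: Hs]).
- rewrite /cf2_ext /=; case: #|ARF'| => [|k] /=; rewrite sccF';
  (split; [exact: subsetT | exact: Hn]).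
Qed.

Theorem proposition38 (x : sem_kind) :
  exists (T : finType) (F F' : AF T),
    normal_expansion F F' /\
    ~ (forall E : {set T}, skeptical (@sigma_of x T) F E ->
         exists E', skeptical (@sigma_of x T) F' E' /\
           (~ (E' \subset AR F) \/ E' = E)).
Proof.
exists bool, F, F'; split.
  split; first by rewrite subsetT.
  split; first by rewrite sub0set.
  move=> a b /=; rewrite inAttF' /ARF !inE => ne _ [/eqP Ha /eqP Hb].
  by rewrite Ha Hb in ne.
move=> H.
have [E' [HE' Hor]] : exists E', skeptical (@sigma_of x _) F' E' /\
           (~ (E' \subset AR F) \/ E' = [set true]).
  apply: H => a; split.
    by rewrite /= /ARF inE => /eqP ->; split => // E; apply: F_ext.
  by move=> [+ _]; rewrite /= /ARF inE.
have E'0 : E' = set0.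
  apply/setP => a; rewrite inE; apply/negP => /HE' [_ Ha].
  have := Ha _ (F'_ext x true); have := Ha _ (F'_ext x false).
  by rewrite !inE => /eqP -> .
case: Hor; rewrite E'0.
  by rewrite sub0set.
by move/setP => /(_ true); rewrite !inE.
Qed.
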